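(* For every $n\ge 1$, the maximum number of flippable faces of a locally valid MV assignment of $M_{2,n}$ is $2n$; it is attained by exactly two locally valid MV assignments, and both are colored blue.
   Context: The $2\times n$ Miura-ori $M_{2,n}$ ($n\ge1$) has faces $\alpha_{i,j}$ ($i\in\{1,2\}$, $j\in\{1,\dots,n\}$), interior vertices $x_1,\dots,x_{n-1}$, and creases $e_0$ and $e_{3k-1},e_{3k},e_{3k+1}$ ($k=1,\dots,n-1$). At $x_k$ the creases are left $e_{3k-3}$, top $e_{3k-1}$, right $e_{3k}$, bottom $e_{3k+1}$. Face $\alpha_{1,j}$ is bordered by those of $e_{3j-4}$ (iff $j\ge2$), $e_{3j-3}$, $e_{3j-1}$ (iff $j\le n-1$); $\alpha_{2,j}$ by those of $e_{3j-2}$ (iff $j\ge2$), $e_{3j-3}$, $e_{3j+1}$ (iff $j\le n-1$). An MV assignment $\mu$ maps creases to $\{1,-1\}$; it is locally valid if for each $k$ exactly one of $\mu(e_{3k-1}),\mu(e_{3k}),\mu(e_{3k+1})$ differs from $\mu(e_{3k-3})$. The face flip $\mu_\alpha$ negates $\mu$ on the creases bordering $\alpha$; $\alpha$ is flippable under $\mu$ if $\mu,\mu_\alpha$ are both locally valid; $f(\mu)$ is the number of flippable faces. For $n\ge2$, the restriction of a locally valid $\mu'$ on $M_{2,n}$ to the creases of $M_{2,n-1}$ (all but $e_{3n-4},e_{3n-3},e_{3n-2}$) is a locally valid $\mu$ on $M_{2,n-1}$, and $\mu'$ is colored blue, orange or magenta according as $f(\mu')-f(\mu)=2,1,0$. Both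 locally valid assignments of $M_{2,1}$ are colored blue. *)

(* Defs.v *)
From mathcomp Require Import all_boot all_order all_algebra.
Set Implicit Arguments. Unset Strict Implicit. Unset Printing Implicit Defensive.
Import GRing.Theory Num.Theory.

(* Creases of M_{2,n}: e_0, e_2, e_3, ..., e_{3n-2}  (3n-2 creases). *)
Definition crease (n : nat) := 'I_(3 * n - 2).
Definition lab (n : nat) (c : crease n) : nat := if val c == 0 then 0 else (val c).+1.

(* Faces alpha_{i,j}: (i, j) : 'I_2 * 'I_n stands for alpha_{i+1, j+1}. *)
Definition face (n : nat) := ('I_2 * 'I_n)%type.

Definition assignment (n : nat) := {ffun crease n -> int}.

Definition is_MV (n : nat) (mu : assignment n) : bool :=
  [forall c, (mu c == 1%R) || (mu c == (-1)%R)].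

(* Local validity: at each interior vertex x_k (1 <= k <= n-1), exactly one
   of mu(e_{3k-1}), mu(e_{3k}), mu(e_{3k+1}) differs from mu(e_{3k-3}). *)
Definition locally_valid (n : nat) (mu : assignment n) : bool :=
  [forall k : 'I_n, (0 < k) ==>
     [forall c0 : crease n, (lab c0 == 3 * k - 3) ==>
        (#|[set c : crease n | (lab c \in [:: 3 * k - 1; 3 * k; 3 * k + 1])
                                && (mu c != mu c0)]| == 1)]].

Definition borders (n : nat) (a : face n) (m : nat) : bool :=
  let j := (val a.2).+1 in
  if val a.1 == 0 then
    [|| (2 <= j) && (m == 3 * j - 4), m == 3 * j - 3 | (j <= n - 1) && (m == 3 * j - 1)]
  else
    [|| (2 <= j) && (m == 3 * j - 2), m == 3 * j - 3 | (j <= n - 1) && (m == 3 * j + 1)].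

Definition flip (n : nat) (mu : assignment n) (a : face n) : assignment n :=
  [ffun c => if borders a (lab c) then (- mu c)%R else mu c].

Definition flippable (n : nat) (mu : assignment n) (a : face n) : bool :=
  locally_valid mu && locally_valid (flip mu a).

Definition nflip (n : nat) (mu : assignment n) : nat :=
  #|[set a : face n | flippable mu a]|.

Lemma restr_le (n : nat) : 3 * (n - 1) - 2 <= 3 * n - 2.
Proof. by apply: leq_sub2r; rewrite leq_mul2l leq_subr orbT. Qed.

(* Restriction of an assignment on M_{2,n} to the creases of M_{2,n-1}
   (all but e_{3n-4}, e_{3n-3}, e_{3n-2}); labels are preserved. *)
Definition restrict (n : nat) (mu : assignment n) : assignment (n - 1) :=
  [ffun c : crease (n - 1) => mu (widen_ord (restr_le n) c)].

Definition blue (n : nat) (mu : assignment n) : bool :=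
  if n == 1 then true else nflip mu == nflip (restrict mu) + 2.

(* Main.v *)
Set Warnings "-notation-overridden -ambiguous-paths".
Require Import Defs.
From mathcomp Require Import all_boot all_order all_algebra.
From mathcomp Require Import zify.
Import GRing.Theory Num.Theory.
Set Implicit Arguments. Unset Strict Implicit. Unset Printing Implicit Defensive.

Lemma card3 m (G : nat -> bool) a b d : (a < b -> b < d -> d < m ->
  #|[set c : 'I_m | (val c \in [:: a; b; d]) && G (val c)]| = G a + G b + G d)%N.
Proof.
move=> hab hbd hdm.
rewrite cardsE cardE /enum_mem size_filter -enumT.
rewrite -(count_map val (fun i => (i \in [:: a; b; d]) && G i)) val_enum_ord.
have e : (fun i => (i \in [:: a; b; d]) && G i) =1 predI G (mem [:: a; b; d]).
  by move=> i /=; rewrite andbC.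
rewrite (eq_count e) -count_filter.
have /permP -> : perm_eq [seq x <- iota 0 m | x \in [:: a; b; d]] [:: a; b; d].
  apply: uniq_perm; first by rewrite filter_uniq // iota_uniq.
    rewrite /= !inE; apply/and3P; split => //; apply/negP; rewrite ?inE; lia.
  move=> x; rewrite mem_filter mem_iota !inE; apply/idP/idP; lia.
by rewrite /= addnA addn0.
Qed.

Definition g n (mu : assignment n) (p : nat) : int :=
  if @insub _ _ 'I_(3 * n - 2) p is Some c then mu c else 0%R.

Lemma gE n (mu : assignment n) (c : crease n) : g mu (val c) = mu c.
Proof. by rewrite /g valK. Qed.

Definition P (l t r b : int) : bool := ((t != l) + (r != l) + (b != l) == 1)%N.

Lemma LVE n (mu : assignment n) : locally_valid mu =
  [forall k : 'I_n, (0 < k)%N ==>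
     P (g mu (3 * k - 4)) (g mu (3 * k - 2)) (g mu (3 * k - 1)) (g mu (3 * k))].
Proof.
apply: eq_forallb => k.
case hk: (0 < nat_of_ord k)%N; last by [].
rewrite /=.
have hkn : (k < n)%N := ltn_ord k.
have h0 : (3 * k - 4 < 3 * n - 2)%N by lia.
pose c0 : crease n := Ordinal h0.
have gc0 : g mu (3 * k - 4) = mu c0 := gE mu c0.
have hset : [set c : crease n | (lab c \in [:: 3 * k - 1; 3 * k; 3 * k + 1])
                                && (mu c != mu c0)] =
  [set c : 'I_(3 * n - 2) | (val c \in [:: 3 * k - 2; 3 * k - 1; 3 * k])
                          && (fun p => g mu p != g mu (3 * k - 4)) (val c)].
  apply/setP => c; rewrite !inE gE gc0; congr (_ && _).
  by rewrite /lab; case: ifP => /eqP h; apply/idP/idP; lia.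
have hc : (3 * k - 2 < 3 * k - 1)%N /\ (3 * k - 1 < 3 * k)%N /\ (3 * k < 3 * n - 2)%N by lia.
case: hc => hc1 [hc2 hc3].
have C3 := card3 (fun p => g mu p != g mu (3 * k - 4)) hc1 hc2 hc3.
apply/forallP/idP.
- move=> /(_ c0) /implyP.
  have lc0 : lab c0 == 3 * k - 3 by rewrite /lab /=; case: ifP => /eqP h; apply/eqP; lia.
  by move=> /(_ lc0); rewrite hset C3.
- move=> HP [v hv]; apply/implyP => hl.
  have -> : Ordinal hv = c0.
    apply: val_inj => /=; move: hl; rewrite /lab /=; case: ifP => /eqP h /eqP; lia.
  by rewrite hset C3.
Qed.

Definition labN (p : nat) : nat := if p == 0 then 0 else p.+1.

Definition bN (i j0 n m : nat) : bool :=
  let j := j0.+1 in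
  if i == 0 then
    [|| (2 <= j) && (m == 3 * j - 4), m == 3 * j - 3 | (j <= n - 1) && (m == 3 * j - 1)]
  else
    [|| (2 <= j) && (m == 3 * j - 2), m == 3 * j - 3 | (j <= n - 1) && (m == 3 * j + 1)].

Definition sf (b : bool) (v : int) : int := if b then (- v)%R else v.

Lemma g_flip n (mu : assignment n) (a : face n) p :
  g (flip mu a) p = sf (bN (val a.1) (val a.2) n (labN p)) (g mu p).
Proof.
rewrite /g /sf; case: insubP => [c _ hc | _]; last by rewrite oppr0 if_same.
by rewrite ffunE -hc.
Qed.

Section BN.
Variables (n k j : nat).
Hypotheses (hk1 : (1 <= k)%N) (hk2 : (k <= n - 1)%N).
Lemma bL0 : bN 0 j n (labN (3 * k - 4)) = (j.+1 == k).
Proof. rewrite /bN /labN /=; case: ifP => /eqP h; apply/idP/idP; lia. Qed.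
Lemma bT0 : bN 0 j n (labN (3 * k - 2)) = (j.+1 == k) || (j.+1 == k.+1).
Proof. rewrite /bN /labN /=; case: ifP => /eqP h; apply/idP/idP; lia. Qed.
Lemma bR0 : bN 0 j n (labN (3 * k - 1)) = (j.+1 == k.+1).
Proof. rewrite /bN /labN /=; case: ifP => /eqP h; apply/idP/idP; lia. Qed.
Lemma bB0 : bN 0 j n (labN (3 * k)) = false.
Proof. rewrite /bN /labN /=; case: ifP => /eqP h; apply/idP/idP; lia. Qed.
Lemma bL1 : bN 1 j n (labN (3 * k - 4)) = (j.+1 == k).
Proof. rewrite /bN /labN /=; case: ifP => /eqP h; apply/idP/idP; lia. Qed.
Lemma bT1 : bN 1 j n (labN (3 * k - 2)) = false.
Proof. rewrite /bN /labN /=; case: ifP => /eqP h; apply/idP/idP; lia. Qed.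
Lemma bR1 : bN 1 j n (labN (3 * k - 1)) = (j.+1 == k.+1).
Proof. rewrite /bN /labN /=; case: ifP => /eqP h; apply/idP/idP; lia. Qed.
Lemma bB1 : bN 1 j n (labN (3 * k)) = (j.+1 == k) || (j.+1 == k.+1).
Proof. rewrite /bN /labN /=; case: ifP => /eqP h; apply/idP/idP; lia. Qed.
End BN.

Lemma Pflip0 (l : int) (x y : bool) : (l = 1 \/ l = -1)%R -> ~~ (x && y) ->
  P (sf x l) (sf (x || y) l) (sf y (- l)%R) (sf false l).
Proof. by case: x; case: y; case=> -> //. Qed.

Lemma Pflip1 (l : int) (x y : bool) : (l = 1 \/ l = -1)%R -> ~~ (x && y) ->
  P (sf x l) (sf false l) (sf y (- l)%R) (sf (x || y) l).
Proof. by case: x; case: y; case=> -> //. Qed.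

Lemma Puniq (l t r b : int) : (l = 1 \/ l = -1)%R -> (t = 1 \/ t = -1)%R ->
  (r = 1 \/ r = -1)%R -> (b = 1 \/ b = -1)%R ->
  P l t r b -> P (- l)%R (- t)%R r b -> P (- l)%R t r (- b)%R ->
  [/\ t = l, r = (- l)%R & b = l].
Proof.
by case=> ->; case=> ->; case=> ->; case=> ->.
Qed.

Lemma LVk n (mu : assignment n) k : locally_valid mu -> (0 < k)%N -> forall hkn : (k < n)%N,
  P (g mu (3 * k - 4)) (g mu (3 * k - 2)) (g mu (3 * k - 1)) (g mu (3 * k)).
Proof.
move=> V hk0 hkn; move: V; rewrite LVE => /forallP /(_ (Ordinal hkn)) /implyP.
by apply.
Qed.

Lemma gMV n (mu : assignment n) p : is_MV mu -> (p < 3 * n - 2)%N ->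
  (g mu p = 1 \/ g mu p = -1)%R.
Proof.
move=> /forallP H hp; rewrite -[p]/(val (Ordinal hp)) gE.
by case/orP: (H (Ordinal hp)) => /eqP ->; [left|right].
Qed.

Lemma vertex_unique n (mu : assignment n) k : is_MV mu -> (forall a, flippable mu a) ->
  (0 < k)%N -> (k < n)%N ->
  [/\ g mu (3 * k - 2) = g mu (3 * k - 4), g mu (3 * k - 1) = (- g mu (3 * k - 4))%R
    & g mu (3 * k) = g mu (3 * k - 4)].
Proof.
move=> hMV hF hk0 hkn.
have hj : (k.-1 < n)%N by lia.
have hk1 : (k <= n - 1)%N by lia.
have := hF (ord0, Ordinal hj); have := hF (Ordinal (isT : (1 < 2)%N), Ordinal hj).
rewrite /flippable => /andP [_ F1] /andP [V F0].
have P0 := LVk V hk0 hkn; have P1 := LVk F0 hk0 hkn; have P2 := LVk F1 hk0 hkn.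
rewrite !g_flip /= in P1 P2.
rewrite bL0 // bT0 // bR0 // bB0 // in P1.
rewrite bL1 // bT1 // bR1 // bB1 // in P2.
have e1 : (k.-1.+1 == k) = true by apply/eqP; lia.
have e2 : (k.-1.+1 == k.+1) = false by apply/negbTE/eqP; lia.
rewrite e1 e2 /sf /= in P1 P2.
by apply: Puniq => //; apply: gMV => //; lia.
Qed.

Definition msv (s : int) (p : nat) : int :=
  if (2 <= p)%N && ~~ odd p then (- s)%R else s.

Definition mus n (s : int) : assignment n := [ffun c => msv s (val c)].

Lemma g_mus n s p : (p < 3 * n - 2)%N -> g (mus n s) p = msv s p.
Proof. by move=> hp; rewrite -[p]/(val (Ordinal hp)) gE ffunE. Qed.

Lemma msv_step s q : (2 <= q)%N ->
  [/\ msv s q.+2 = msv s q, msv s q.+3 = (- msv s q)%R & msv s q.+4 = msv s q].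
Proof.
move=> hq; rewrite /msv /= !negbK hq /=.
by case: (odd q); rewrite /= ?opprK.
Qed.

Lemma msv_vertex s k : (0 < k)%N ->
  [/\ msv s (3 * k - 2) = msv s (3 * k - 4), msv s (3 * k - 1) = (- msv s (3 * k - 4))%R
    & msv s (3 * k) = msv s (3 * k - 4)].
Proof.
move=> hk0.
have [->|hk2] : k = 1 \/ (2 <= k)%N by lia.
  by rewrite /msv /=.
have e1 : 3 * k - 2 = (3 * k - 4).+2 by lia.
have e2 : 3 * k - 1 = (3 * k - 4).+3 by lia.
have e3 : 3 * k = (3 * k - 4).+4 by lia.
have hq : (2 <= 3 * k - 4)%N by lia.
have := msv_step s hq.
by rewrite -e3 -e2 -e1.
Qed.

Lemma msv_pm s p : (s = 1 \/ s = -1)%R -> (msv s p = 1 \/ msv s p = -1)%R.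
Proof. by rewrite /msv; case: ifP => _; case=> ->; auto. Qed.

Lemma uniq_claim n (mu : assignment n) : is_MV mu -> (forall a, flippable mu a) ->
  forall k, (k <= n - 1)%N -> forall p, (p <= 3 * k)%N -> g mu p = msv (g mu 0) p.
Proof.
move=> hMV hF; elim=> [|k IH] hk p hp.
  by have -> : p = 0 by lia.
case: (leqP p (3 * k)) => hp'; first by apply: IH => //; lia.
have [V1 V2 V3] := vertex_unique (k := k.+1) hMV hF isT (ltac:(lia)).
have [M1 M2 M3] := msv_vertex (g mu 0) (k := k.+1) isT.
have HL : g mu (3 * k.+1 - 4) = msv (g mu 0) (3 * k.+1 - 4) by apply: IH; lia.
have : p = 3 * k.+1 - 2 \/ p = 3 * k.+1 - 1 \/ p = 3 * k.+1 by lia.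
case=> [->|[->|->]].
- by rewrite V1 HL M1.
- by rewrite V2 HL M2.
- by rewrite V3 HL M3.
Qed.

Lemma mus_valid n s : (s = 1 \/ s = -1)%R -> locally_valid (mus n s).
Proof.
move=> hs; rewrite LVE; apply/forallP => k; apply/implyP => hk0.
have hkn := ltn_ord k.
have [M1 M2 M3] := msv_vertex s hk0.
rewrite !g_mus; try lia.
rewrite M1 M2 M3.
by case: (msv_pm (3 * k - 4) hs) => ->.
Qed.

Lemma mus_flip_valid n s a : (s = 1 \/ s = -1)%R -> locally_valid (flip (mus n s) a).
Proof.
move=> hs; rewrite LVE; apply/forallP => k; apply/implyP => hk0.
have hkn := ltn_ord k.
have hk1 : (k <= n - 1)%N by lia.
have [M1 M2 M3] := msv_vertex s hk0.
rewrite !g_flip !g_mus; try lia.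
rewrite M1 M2 M3.
have hl := msv_pm (3 * k - 4) hs.
have ex : forall j : nat, ~~ ((j.+1 == k) && (j.+1 == k.+1)).
  by move=> j; apply/negP => /andP [/eqP h1 /eqP h2]; lia.
case: a => [[[|[|i]] hi] [j hj]] /=.
- rewrite bL0 // bT0 // bR0 // bB0 //; exact: Pflip0.
- rewrite bL1 // bT1 // bR1 // bB1 //; exact: Pflip1.
- by [].
Qed.

Lemma card_face n : #|{: face n}| = (2 * n)%N.
Proof. by rewrite card_prod !card_ord. Qed.

Lemma mus_nflip n s : (s = 1 \/ s = -1)%R -> nflip (mus n s) = (2 * n)%N.
Proof.
move=> hs; rewrite /nflip.
have -> : [set a | flippable (mus n s) a] = setT.
  apply/setP => a; rewrite !inE; apply/andP; split.
    exact: mus_valid.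
  exact: mus_flip_valid.
by rewrite cardsT card_face.
Qed.

Lemma nflip_le n (mu : assignment n) : (nflip mu <= 2 * n)%N.
Proof. by rewrite /nflip -card_face max_card. Qed.

Lemma full n (mu : assignment n) : nflip mu = (2 * n)%N -> forall a, flippable mu a.
Proof.
move=> h a.
have : [set a | flippable mu a] == setT.
  by rewrite eqEcard subsetT cardsT card_face /= -h.
move/eqP => E; have : a \in [set a | flippable mu a] by rewrite E inE.
by rewrite inE.
Qed.

Lemma restrict_mus n s : restrict (mus n s) = mus (n - 1) s.
Proof. by apply/ffunP => c; rewrite !ffunE. Qed.

Theorem lemma4p6 (n : nat) (hn : 1 <= n) :
  (forall mu : assignment n, is_MV mu -> locally_valid mu -> nflip mu <= 2 * n) /\
  exists mu1 mu2 : assignment n,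
    [/\ mu1 != mu2,
        [/\ is_MV mu1, locally_valid mu1 & nflip mu1 = 2 * n],
        [/\ is_MV mu2, locally_valid mu2 & nflip mu2 = 2 * n],
        (forall mu : assignment n, is_MV mu -> locally_valid mu ->
           nflip mu = 2 * n -> mu = mu1 \/ mu = mu2)
      & blue mu1 && blue mu2].
Proof.
have h1 : ((1 : int) = 1 \/ (1 : int) = -1)%R by left.
have h2 : ((-1 : int) = 1 \/ (-1 : int) = -1)%R by right.
have MV : forall s, (s = 1 \/ s = -1)%R -> is_MV (mus n s).
  move=> s hs; apply/forallP => c; rewrite ffunE.
  by case: (msv_pm (val c) hs) => ->; rewrite eqxx ?orbT.
split; first by move=> mu _ _; exact: nflip_le.
exists (mus n 1%R), (mus n (-1)%R); split.
- apply/eqP => E.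
  have h0 : (0 < 3 * n - 2)%N by lia.
  have := congr1 (fun f : assignment n => f (Ordinal h0)) E.
  by rewrite /= !ffunE /msv /=.
- by split; [exact: (MV _ h1) | exact: (mus_valid _ h1) | exact: (mus_nflip _ h1)].
- by split; [exact: (MV _ h2) | exact: (mus_valid _ h2) | exact: (mus_nflip _ h2)].
- move=> mu hMV hV hN.
  have hF := full hN.
  have C := uniq_claim hMV hF (leqnn (n - 1)).
  have h0 : (0 < 3 * n - 2)%N by lia.
  case: (gMV hMV h0) => e; [left|right]; apply/ffunP => c;
    rewrite ffunE -gE C ?e //; have := ltn_ord c; change (val c) with (nat_of_ord c); lia.
- rewrite /blue; case: eqP => // hn1.
  rewrite !restrict_mus !mus_nflip //.
  by apply/andP; split; apply/eqP; lia.
Qed.
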